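(* Let $G$ be a graph and let $k,m\geq 1$ be integers. Then $k$ cops have a winning strategy on $G$ in the game against $m$ robbers if and only if $k$ cops have a winning strategy on $G$ in the game against a single robber.
   Context: All graphs are finite, simple, connected and reflexive (every vertex is considered adjacent to itself, so a player may stay in place). The game of $k$ cops and $m$ robbers on $G$: in round 0 the cops first choose starting vertices, then the robbers choose theirs. In each round $i\geq 1$, all $k$ cops move (each to an adjacent vertex or staying), then all $m$ robbers move likewise. Several players may occupy the same vertex. Whenever a cop and some robbers occupy the same vertex, those robbers are captured and take no further part in the game (robbers are captured one by one; they need not be captured simultaneously). Both sides have full information. The cops win if all robbers are captured after finitely many rounds; otherwise the robbers win. $G$ is $k$-cop-win if $k$ cops have a winning strategy against one robber; $1$-cop-win graphs are called cop-win. *)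

(* Defs.v *)
From mathcomp Require Import all_boot.
Set Implicit Arguments. Unset Strict Implicit. Unset Printing Implicit Defensive.

Section CopsRobbers.
Variables (T : finType) (e : rel T).

Definition adj (x y : T) : bool := (x == y) || e x y.

(* positions: cops are always on the board; a robber is [Some v] on vertex v,
   or [None] once captured *)
Definition cop_pos (k : nat) := {ffun 'I_k -> T}.
Definition rob_pos (m : nat) := {ffun 'I_m -> option T}.

Definition capture k m (c : cop_pos k) (r : rob_pos m) : rob_pos m :=
  [ffun j => if r j is Some v then
               (if [exists i, c i == v] then None else Some v)
             else None].

Definition cop_move k (c c' : cop_pos k) : Prop := forall i, adj (c i) (c' i).

(* robbers' half-round: cops are at c (already moved), robbers were at r. *)
Definition rob_step k m (c : cop_pos k) (r r' : rob_pos m) : Prop :=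
  forall j, match capture c r j with
            | None => r' j = None
            | Some v => exists v', adj v v' /\
                          r' j = (if [exists i, c i == v'] then None else Some v')
            end.

(* a cop strategy maps the full history (positions at the end of rounds
   0..n-1) to the cops' positions in round n (round 0: starting vertices) *)
Definition cop_strategy k m := seq (cop_pos k * rob_pos m) -> cop_pos k.

Definition history k m (C : nat -> cop_pos k) (R : nat -> rob_pos m) n :=
  [seq (C i, R i) | i <- iota 0 n].

(* C n = cops' positions after their move in round n,
   R n = robbers' positions (None = captured) at the end of round n. *)
Definition consistent k m (s : cop_strategy k m)
    (C : nat -> cop_pos k) (R : nat -> rob_pos m) : Prop :=
  [/\ forall n, C n = s (history C R n),
      exists p : {ffun 'I_m -> T}, R 0 = capture (C 0) [ffun j => Some (p j)]
    & forall n, rob_step (C n.+1) (R n) (R n.+1)].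

Definition winning k m (s : cop_strategy k m) : Prop :=
  forall C R, consistent s C R ->
    (forall n, cop_move (C n) (C n.+1)) /\
    exists n, forall j, R n j = None.

Definition cops_win (k m : nat) : Prop := exists s : cop_strategy k m, winning s.

End CopsRobbers.

(* Main.v *)
Require Import Defs.
From mathcomp Require Import all_boot.
From Stdlib Require Import ClassicalEpsilon Classical.
Set Implicit Arguments. Unset Strict Implicit. Unset Printing Implicit Defensive.

Lemma m_to_1 (T : finType) (e : rel T) k m (hm : 0 < m) :
  cops_win e k m -> cops_win e k 1.
Proof.
case=> s Hs.
pose f (x : cop_pos T k * rob_pos T 1) : cop_pos T k * rob_pos T m :=
  (x.1, [ffun j : 'I_m => x.2 ord0]).
exists (fun h => s (map f h)).
move=> C R [HC [p Hp] Hst].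
pose R' n : rob_pos T m := [ffun j => R n ord0].
have HC' : consistent e s C R'.
  split.
  - by move=> n; rewrite HC /history -map_comp; congr s.
  - exists [ffun j => p ord0]; apply/ffunP=> j.
    by rewrite /R' !ffunE Hp /capture !ffunE.
  - move=> n j; have := Hst n ord0.
    by rewrite /R' /capture !ffunE.
have [Hmv [n Hn]] := Hs C R' HC'.
split=> //; exists n => j.
by have := Hn (Ordinal hm); rewrite ffunE (ord1 j).
Qed.
Definition inC (T : finType) k (c : cop_pos T k) (v : T) : bool := [exists i, c i == v].
Definition legal (T : finType) (e : rel T) k (c c' : cop_pos T k) : bool :=
  [forall i, adj e (c i) (c' i)].

Fixpoint win (T : finType) (e : rel T) k (n : nat) (c : cop_pos T k) (r : T) {struct n} : bool :=
  if n is n'.+1 then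
    [exists c' : cop_pos T k, legal e c c' &&
       (inC c' r || [forall r' : T, adj e r r' ==> inC c' r' || win e n' c' r'])]
  else false.

Lemma legal_refl (T : finType) (e : rel T) k (c : cop_pos T k) : legal e c c.
Proof. by apply/forallP=> i; rewrite /adj eqxx. Qed.

Lemma winW (T : finType) (e : rel T) k n (c : cop_pos T k) r :
  win e n c r -> win e n.+1 c r.
Proof.
elim: n c r => // n IH c r /existsP [c' /andP [Hl H]]; apply/existsP; exists c'.
rewrite Hl /=; case/orP: H => [->//|/forallP H]; apply/orP; right.
apply/forallP=> r'; apply/implyP=> a.
have /implyP/(_ a)/orP[->//|/IH Hw] := H r'; by apply/orP; right.
Qed.

Lemma winW_le (T : finType) (e : rel T) k n n' (c : cop_pos T k) r :
  n <= n' -> win e n c r -> win e n' c r.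
Proof.
move/subnK <-; elim: (n' - n) => // d IH H; rewrite addSn; exact/winW/IH.
Qed.

Lemma ex_bound (A : eqType) (Q : nat -> A -> bool) (s : seq A) :
  (forall n n' x, n <= n' -> Q n x -> Q n' x) ->
  (forall x, x \in s -> exists n, Q n x) -> exists N, forall x, x \in s -> Q N x.
Proof.
move=> HQ; elim: s => [|x s IH] H; first by exists 0.
have [n Hn] := H x (mem_head _ _).
have [N HN] : exists N, forall y, y \in s -> Q N y.
  by apply: IH => y Hy; apply: H; rewrite inE Hy orbT.
exists (maxn n N) => y; rewrite inE => /orP [/eqP ->|Hy].
  exact: HQ (leq_maxl _ _) Hn.
exact: HQ (leq_maxr _ _) (HN _ Hy).
Qed.

Lemma ex_bound_fin (A : finType) (Q : nat -> A -> bool) :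
  (forall n n' x, n <= n' -> Q n x -> Q n' x) ->
  (forall x, exists n, Q n x) -> exists N, forall x, Q N x.
Proof.
move=> HQ H; have [N HN] := @ex_bound A Q (enum A) HQ (fun x _ => H x).
by exists N => x; apply: HN; rewrite mem_enum.
Qed.

Lemma pred_closed (T : finType) (e : rel T) k (c c' : cop_pos T k) :
  legal e c c' -> (forall r, exists n, win e n c' r) -> forall r, exists n, win e n c r.
Proof.
move=> Hl H r.
have [N HN] := @ex_bound_fin T (fun n r => win e n c' r) (fun n n' x h => @winW_le _ e k n n' c' x h) H.
exists N.+1; apply/existsP; exists c'; rewrite Hl /=; apply/orP; right.
by apply/forallP=> r'; apply/implyP=> _; apply/orP; right; exact: HN.
Qed.

Definition upd (T : finType) k (c : cop_pos T k) i (y : T) : cop_pos T k :=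
  [ffun j => if j == i then y else c j].

Lemma move_one (T : finType) (e : rel T) k (x y : T) : connect e x y ->
  forall (c : cop_pos T k) i, c i = x ->
  (forall r, exists n, win e n (upd c i y) r) -> forall r, exists n, win e n c r.
Proof.
move/connectP=> [p Hp ->] {y}.
elim: p x Hp => [|z p IH] x /=.
  move=> _ c i Hci; suff -> : upd c i x = c by [].
  by apply/ffunP=> j; rewrite ffunE; case: eqP => // ->.
case/andP=> Hxz Hp c i Hci H.
apply: (@pred_closed _ e k c (upd c i z)).
  apply/forallP=> j; rewrite ffunE; case: eqP => [->|_]; last by rewrite /adj eqxx.
  by rewrite Hci /adj Hxz orbT.
apply: (IH z Hp _ i); first by rewrite ffunE eqxx.
suff -> : upd (upd c i z) i (last z p) = upd c i (last z p) by [].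
by apply/ffunP=> j; rewrite !ffunE; case: eqP.
Qed.

Lemma all_states (T : finType) (e : rel T) k (c0 : cop_pos T k) :
  (forall x y : T, connect e x y) ->
  (forall r, exists n, win e n c0 r) -> forall (c : cop_pos T k) r, exists n, win e n c r.
Proof.
move=> Hconn H0.
suff H : forall a (c : cop_pos T k), #|[set i | c i != c0 i]| = a ->
  forall r, exists n, @win T e k n c r by move=> c; exact: H.
elim=> [|a IH] c Hc.
  suff -> : c = c0 by [].
  apply/ffunP=> i; apply/eqP; apply: contraT => Hi.
  by move: Hc; rewrite (cardD1 i) inE Hi.
have [i Hi] : exists i, i \in [set i | c i != c0 i].
  apply/set0Pn; apply/negP=> /eqP H; by rewrite H cards0 in Hc.
apply: (move_one (Hconn (c i) (c0 i)) (erefl _)).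
apply: IH; move: Hc; rewrite (cardsD1 i) Hi add1n => -[<-].
apply: eq_card => j; rewrite !inE !ffunE.
by case: (eqVneq j i) => [->|]; rewrite ?eqxx.
Qed.
Definition nw (T : finType) (e : rel T) k (c : cop_pos T k) (v : T) : Prop :=
  forall n, ~~ win e n c v.

Lemma win1_inC (T : finType) (e : rel T) k (c : cop_pos T k) v :
  inC c v -> win e 1 c v.
Proof. by move=> H; apply/existsP; exists c; rewrite legal_refl H. Qed.

Lemma nowin_step (T : finType) (e : rel T) k (c c' : cop_pos T k) v :
  nw e c v -> legal e c c' ->
  ~~ inC c' v /\ exists v', adj e v v' /\ ~~ inC c' v' /\ nw e c' v'.
Proof.
move=> Hnw Hl.
have H1 : ~~ inC c' v.
  apply/negP=> Hin; move: (Hnw 1) => /negP; apply.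
  by apply/existsP; exists c'; rewrite Hl Hin.
split=> //; apply: NNPP => Hne.
have H2 : forall v', exists n, adj e v v' ==> inC c' v' || win e n c' v'.
  move=> v'; case: (boolP (adj e v v')) => Ha; last by exists 0.
  case: (boolP (inC c' v')) => Hi; first by exists 0.
  apply: NNPP => Hn; apply: Hne; exists v'; split=> //; split=> // n.
  by apply/negP=> Hw; apply: Hn; exists n; rewrite Hw.
have Hmono : forall n n' x, n <= n' ->
  (adj e v x ==> inC c' x || win e n c' x) -> (adj e v x ==> inC c' x || win e n' c' x).
  move=> n n' x Hnn /implyP H; apply/implyP=> a; case/orP: (H a) => [->//|Hw].
  by apply/orP; right; exact: winW_le Hnn Hw.
have [N HN] := @ex_bound_fin T (fun n v' => adj e v v' ==> inC c' v' || win e n c' v') Hmono H2.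
move: (Hnw N.+1) => /negP; apply.
apply/existsP; exists c'; rewrite Hl (negbTE H1) /=; apply/forallP=> v'; exact: HN.
Qed.

Definition rchoice (T : finType) (e : rel T) k (c : cop_pos T k) (v : T) : T :=
  epsilon (inhabits v) (fun v' => adj e v v' /\ ((~~ inC c v' /\ nw e c v') \/
     ~ (exists w, adj e v w /\ ~~ inC c w /\ nw e c w))).

Lemma rchoice_spec (T : finType) (e : rel T) k (c : cop_pos T k) (v : T) :
  adj e v (rchoice e c v) /\
  ((exists w, adj e v w /\ ~~ inC c w /\ nw e c w) ->
    ~~ inC c (rchoice e c v) /\ nw e c (rchoice e c v)).
Proof.
rewrite /rchoice.
set P := (fun v' => _).
have [Ha Hb] : P (epsilon (inhabits v) P).
  apply: epsilon_spec.
  case: (classic (exists w, adj e v w /\ ~~ inC c w /\ nw e c w)).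
    by move=> [w [Hw [Hw1 Hw2]]]; exists w; split=> //; left.
  by move=> Hn; exists v; split; [rewrite /adj eqxx | right].
split=> // Hex; case: Hb => // Hn; by exfalso; apply: Hn.
Qed.

Definition rmove (T : finType) (e : rel T) k (c : cop_pos T k) (o : option T) : option T :=
  if o is Some v then
    (if inC c v then None else
       let v' := rchoice e c v in if inC c v' then None else Some v')
  else None.

Lemma c0_wins (T : finType) (e : rel T) k (s : cop_strategy T k 1) :
  winning e s -> forall r, exists n, win e n (s [::]) r.
Proof.
move=> Hs r0; apply: NNPP => Hn.
have Hnw : nw e (s [::]) r0.
  by move=> n; apply/negP=> Hw; apply: Hn; exists n.
pose nxt (h : seq (cop_pos T k * rob_pos T 1)) (c : cop_pos T k) : rob_pos T 1 :=
  if h is x :: h' then [ffun j => rmove e c ((last x h').2 j)]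
  else capture c [ffun j => Some r0].
pose step h := rcons h (s h, nxt h (s h)).
pose H n := iter n step [::].
pose C n := s (H n).
pose R n := nxt (H n) (C n).
have HS : forall n, H n.+1 = rcons (H n) (C n, R n) by [].
have Hhist : forall n, history C R n = H n.
  elim=> [|n IH] //; rewrite HS -IH /history -[n.+1]addn1 iotaD map_cat /= cats1.
  by [].
have HR0 : R 0 = capture (C 0) [ffun j => Some r0] by [].
have HRS : forall n, R n.+1 = [ffun j => rmove e (C n.+1) (R n j)].
  move=> n; have -> : R n.+1 = nxt (rcons (H n) (C n, R n)) (C n.+1) by [].
  by case: (H n) => [|y h] //=; rewrite last_rcons.
have Hcons : consistent e s C R.
  split.
  - by move=> n; rewrite Hhist.
  - by exists [ffun=> r0]; rewrite HR0; congr capture; apply/ffunP=> j; rewrite !ffunE.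
  - move=> n j; rewrite HRS /capture !ffunE /rmove /inC.
    case: (R n j) => [v|] //; case: ifP => Hv //.
    exists (rchoice e (C n.+1) v); split; first by case: (@rchoice_spec _ e _ (C n.+1) v).
    by [].
have [Hmv [N HN]] := Hs C R Hcons.
have Hinv : forall n, exists v, nw e (C n) v /\ R n ord0 = Some v.
  elim=> [|n [v [Hv HRv]]].
    exists r0; split => //; rewrite HR0 /capture !ffunE.
    have -> : [exists i, C 0 i == r0] = false.
      by apply/negbTE/negP=> Hin; move: (Hnw 1) => /negP; apply; apply: win1_inC.
    by [].
  have Hl : legal e (C n) (C n.+1) by apply/forallP; exact: Hmv.
  have [Hnot Hex] := nowin_step Hv Hl.
  have [_ Hch] := @rchoice_spec _ e _ (C n.+1) v.
  have [Hc1 Hc2] := Hch Hex.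
  exists (rchoice e (C n.+1) v); split=> //.
  by rewrite HRS ffunE HRv /rmove (negbTE Hnot) (negbTE Hc1).
have [v [_ Hv]] := Hinv N.
by rewrite HN in Hv.
Qed.

Definition rk (T : finType) (e : rel T) k
  (Hall : forall (c : cop_pos T k) (v : T), exists n, win e n c v) c v : nat :=
  @ex_minn (fun n => win e n c v) (Hall c v).

Definition sig (T : finType) (e : rel T) k
  (Hall : forall (c : cop_pos T k) (v : T), exists n, win e n c v) c v : cop_pos T k :=
  odflt c [pick c' | legal e c c' && (inC c' v ||
     [forall r', adj e v r' ==> inC c' r' || win e (rk Hall c v).-1 c' r'])].

Lemma sig_spec (T : finType) (e : rel T) k
  (Hall : forall (c : cop_pos T k) (v : T), exists n, win e n c v) c v :
  legal e c (sig Hall c v) && (inC (sig Hall c v) v ||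
     [forall r', adj e v r' ==> inC (sig Hall c v) r' || win e (rk Hall c v).-1 (sig Hall c v) r']).
Proof.
rewrite /sig; case: pickP => [c' //|H0]; exfalso.
move: (H0); rewrite /rk; case: ex_minnP => n Hw _.
case: n Hw => // n /existsP [c' Hc'] H1.
by move: (H1 c'); rewrite /= Hc'.
Qed.

Lemma rk_pos (T : finType) (e : rel T) k
  (Hall : forall (c : cop_pos T k) (v : T), exists n, win e n c v) c v : 0 < rk Hall c v.
Proof. by rewrite /rk; case: ex_minnP => [[|n]]. Qed.

Lemma rk_min (T : finType) (e : rel T) k
  (Hall : forall (c : cop_pos T k) (v : T), exists n, win e n c v) c v n :
  win e n c v -> rk Hall c v <= n.
Proof. by rewrite /rk; case: ex_minnP => m _ H; exact: H. Qed.

Definition nextc (T : finType) (e : rel T) k m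
  (Hall : forall (c : cop_pos T k) (v : T), exists n, win e n c v)
  (c : cop_pos T k) (R : rob_pos T m) : cop_pos T k :=
  match [pick j | R j != None] with
  | Some j => if R j is Some v then sig Hall c v else c
  | None => c
  end.

Definition sm (T : finType) (e : rel T) k m
  (Hall : forall (c : cop_pos T k) (v : T), exists n, win e n c v)
  (c0 : cop_pos T k) : cop_strategy T k m :=
  fun h => if h is x :: h' then nextc Hall (last x h').1 (last x h').2 else c0.

Lemma sm_win (T : finType) (e : rel T) (k m : nat)
  (Hall : forall (c : cop_pos T k) (v : T), exists n, win e n c v)
  (c0 : cop_pos T k) : winning e (@sm T e k m Hall c0).
Proof.
move=> C R [HC _ Hst].
have HCS : forall n, C n.+1 = nextc Hall (C n) (R n).
  move=> n; rewrite HC /history -[n.+1]addn1 iotaD map_cat cats1 /=.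
  by case: (map _ _) => [|y h] //=; rewrite last_rcons.
have Hlegal : forall n, legal e (C n) (C n.+1).
  move=> n; rewrite HCS /nextc; case: pickP => [j _|_]; last exact: legal_refl.
  case: (R n j) => [v|]; last exact: legal_refl.
  by case/andP: (sig_spec Hall (C n) v).
split; first by move=> n i; exact: (forallP (Hlegal n) i).
have Hdead : forall n j, R n j = None -> R n.+1 j = None.
  by move=> n j H; have := Hst n j; rewrite /capture ffunE H.
pose alive n := [set j | R n j != None].
suff Hmain : forall a n, #|alive n| <= a -> exists n', forall j, R n' j = None.
  exact: Hmain _ 0 (leqnn _).
elim=> [|a IHa] n Ha.
  exists n => j; apply/eqP; apply: contraT => Hj.
  by move: Ha; rewrite (cardD1 j) inE Hj.
have Hpick : forall n, (forall j, R n j = None) \/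
   exists j v, [pick j | R n j != None] = Some j /\ R n j = Some v.
  move=> n'; case: pickP => [j Hj|H0]; last first.
    by left=> j; apply/eqP; move: (H0 j) => /= /negbFE.
  right; case E: (R n' j) Hj => [v|] // _; by exists j, v.
suff Hr : forall r n, #|alive n| <= a.+1 ->
    (forall j v, [pick j | R n j != None] = Some j -> R n j = Some v -> rk Hall (C n) v <= r) ->
    exists n', forall j, R n' j = None.
  case: (Hpick n) => [H|[j [v [Hp Hj]]]]; first by exists n.
  apply: (Hr (rk Hall (C n) v) n Ha) => j' v'; rewrite Hp => -[<-]; rewrite Hj => -[<-].
  by [].
elim=> [|r IHr] n' Hn Hrk.
  case: (Hpick n') => [H|[j [v [Hp Hj]]]]; first by exists n'.
  by have := Hrk j v Hp Hj; rewrite leqn0 => /eqP Hz; have := rk_pos Hall (C n') v; rewrite Hz.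
case: (Hpick n') => [H|[j [v [Hp Hj]]]]; first by exists n'.
have Hsub : alive n'.+1 \subset alive n'.
  apply/subsetP=> j'; rewrite !inE; apply: contra => /eqP H; apply/eqP; exact: Hdead.
case: (boolP [exists j', (R n' j' != None) && (R n'.+1 j' == None)]) => [Hc|Hnc].
  apply: (IHa n'.+1); rewrite -ltnS; apply: leq_trans Hn.
  apply: proper_card; apply/properP; split=> //.
  case/existsP: Hc => j' /andP [H1 H2]; exists j'; by rewrite /alive !inE ?H1 ?H2.
have Heq : forall j', (R n'.+1 j' != None) = (R n' j' != None).
  move=> j'; case E: (R n' j') => [w|]; last by rewrite (Hdead _ _ E).
  apply/negP => /eqP H; move/existsPn: Hnc => /(_ j'); by rewrite E H.
have Hp' : [pick j | R n'.+1 j != None] = Some j by rewrite (eq_pick Heq).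
have HC1 : C n'.+1 = sig Hall (C n') v by rewrite HCS /nextc Hp Hj.
have := Hst n' j; rewrite /capture ffunE Hj.
case: ifP => Hv.
  by move=> H; move: (Heq j); rewrite H Hj.
case=> v' [Hadj Hj']; case: ifP Hj' => Hv' Hj'.
  by move: (Heq j); rewrite Hj' Hj.
have := sig_spec Hall (C n') v; rewrite -HC1 => /andP [_].
rewrite /inC Hv /= => /forallP /(_ v') /implyP /(_ Hadj).
rewrite /inC Hv' /= => Hw.
apply: (IHr n'.+1); first by apply: leq_trans Hn; exact: subset_leq_card.
move=> j0 v0; rewrite Hp' => -[<-]; rewrite Hj' => -[<-].
have := rk_min Hall Hw; have := Hrk j v Hp Hj.
by move: (rk Hall (C n') v) => [|x] //= Hx1 Hx2; apply: leq_trans Hx2 _.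
Qed.

Theorem mainTheorem1 (T : finType) (e : rel T)
  (e_sym : symmetric e) (e_irr : irreflexive e)
  (e_conn : forall x y : T, connect e x y)
  (k m : nat) (hk : 1 <= k) (hm : 1 <= m) :
  cops_win e k m <-> cops_win e k 1.
Proof.
split; first exact: m_to_1.
case=> s1 Hs1.
have Hall := @all_states T e k (s1 [::]) e_conn (c0_wins Hs1).
exists (@sm T e k m Hall (s1 [::])); exact: sm_win.
Qed.
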